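(* In the setting of finite contexts $\mathcal Z=\{z_1,\dots,z_m\}$ with distribution $p$ and a finite trajectory set $\mathcal T$, assume that for every $z\in\mathcal Z$ the map $\tau\mapsto u(\tau,z)$ is injective on $\mathcal T$, and that the set $X_{\mathrm{ics}}$ of inconsistent pairs is nonempty. Fix $k$. If $$p(z_k)>\max_{(\tau,\tau')\in X_{\mathrm{ics}}}\frac{1+\max_i N(\tau,\tau',z_i)}{2+N(\tau,\tau',z_k)+\max_i N(\tau,\tau',z_i)},$$ then for all $\tau^1,\tau^2\in\mathcal T$ with $u(\tau^1,z_k)>u(\tau^2,z_k)$ we have $BC_p(\tau^1)>BC_p(\tau^2)$, hence $\hat u(\tau^1)>\hat u(\tau^2)$; consequently $\hat u(\tau^1)>\hat u(\tau^2)\iff u(\tau^1,z_k)>u(\tau^2,z_k)$ for all $\tau^1,\tau^2\in\mathcal T$.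
   Context: A pair $(\tau^1,\tau^2)$ is consistent if $u(\tau^1,z)\ge u(\tau^2,z)$ for all $z$ or $u(\tau^1,z)\le u(\tau^2,z)$ for all $z$; otherwise inconsistent. $N(\tau^1,\tau^2,z)=\sum_{\tau\in\mathcal T}\big(\mathbb I\{u(\tau^1,z)>u(\tau,z)>u(\tau^2,z)\}+\mathbb I\{u(\tau^1,z)<u(\tau,z)<u(\tau^2,z)\}\big)$. $O_u(a,b,z)=\tfrac12$ if $u(a,z)=u(b,z)$, $1$ if $u(a,z)>u(b,z)$, $0$ otherwise. $BC_p(a)=\frac{1}{|\mathcal T|}\sum_{b\in\mathcal T}\mathbb E_{z\sim p}[O_u(a,b,z)]$. The learned utility $\hat u:\mathcal T\to\mathbb R$ satisfies $\hat u(a)>\hat u(b)\iff BC_p(a)>BC_p(b)$. *)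

(* Defs.v *)
From mathcomp Require Import all_boot all_order all_algebra.
Set Implicit Arguments. Unset Strict Implicit. Unset Printing Implicit Defensive.
Import Order.TTheory GRing.Theory Num.Theory.
Local Open Scope ring_scope.

Section Defs.
Variables (R : realFieldType) (T Z : finType).

Definition is_distribution (p : Z -> R) : Prop :=
  (forall z, 0 <= p z) /\ \sum_(z : Z) p z = 1.

Definition consistent (u : T -> Z -> R) (t1 t2 : T) : Prop :=
  (forall z, u t1 z >= u t2 z) \/ (forall z, u t1 z <= u t2 z).

Definition inconsistent (u : T -> Z -> R) (t1 t2 : T) : Prop :=
  ~ consistent u t1 t2.

Definition Ncount (u : T -> Z -> R) (t1 t2 : T) (z : Z) : nat :=
  \sum_(t : T) addn ((u t z < u t1 z)%R && (u t2 z < u t z)%R)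
                    ((u t1 z < u t z)%R && (u t z < u t2 z)%R).

Definition maxN (u : T -> Z -> R) (t1 t2 : T) : nat :=
  \max_(i : Z) Ncount u t1 t2 i.

Definition Ou (u : T -> Z -> R) (a b : T) (z : Z) : R :=
  if u a z == u b z then 2^-1 else if u a z > u b z then 1 else 0.

Definition BC (u : T -> Z -> R) (p : Z -> R) (a : T) : R :=
  (#|T|%:R)^-1 * \sum_(b : T) \sum_(z : Z) p z * Ou u a b z.

End Defs.

(* Main.v *)
Require Import Defs.
From mathcomp Require Import all_boot all_order all_algebra.
From mathcomp Require Import ring lra.
Import Order.TTheory GRing.Theory Num.Theory.
Local Open Scope ring_scope.

Lemma pt (R : realFieldType) (T Z : finType) (u : T -> Z -> R) z a b t :
  (forall z, injective (fun t => u t z)) -> u b z < u a z ->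
  Ou u a t z - Ou u b t z =
  (addn ((u t z < u a z) && (u b z < u t z)) ((u a z < u t z) && (u t z < u b z)))%:R
  + ((t == a)%:R + (t == b)%:R) / 2.
Proof.
move=> inj hab; rewrite /Ou.
have nab : (a == b) = false.
  by apply/negbTE/eqP => E; move: hab; rewrite E ltxx.
have [->|ta] := eqVneq t a.
  rewrite eqxx nab ltxx /= (lt_eqF hab) (lt_gtF hab) /=; by field.
have [->|tb] := eqVneq t b.
  rewrite eqxx (gt_eqF hab) hab ltxx /= andbF /= ?(negbTE ta); by field.
have na : u t z != u a z by apply: contra ta => /eqP/inj ->.
have nb : u t z != u b z by apply: contra tb => /eqP/inj ->.
rewrite eq_sym (negbTE na) eq_sym (negbTE nb) ?(negbTE ta) ?(negbTE tb) /=.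
case: (ltgtP (u t z) (u a z)) na => // h1 _;
case: (ltgtP (u t z) (u b z)) nb => // h2 _ /=; try (by field); lra.
Qed.

Lemma sumD (R : realFieldType) (T Z : finType) (u : T -> Z -> R) z a b :
  (forall z, injective (fun t => u t z)) -> u b z < u a z ->
  \sum_t (Ou u a t z - Ou u b t z) = (Ncount u a b z)%:R + 1.
Proof.
move=> inj hab.
have nab : (a == b) = false.
  by apply/negbTE/eqP => E; move: hab; rewrite E ltxx.
rewrite (eq_bigr _ (fun t _ => @pt R T Z u z a b t inj hab)) big_split /= /Ncount natr_sum.
congr (_ + _).
rewrite -mulr_suml big_split /=.
rewrite (bigD1 a) //= eqxx big1; last by move=> i /negbTE ->.
rewrite (bigD1 b) //= eqxx big1; last by move=> i /negbTE ->.
rewrite !addr0; by field.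
Qed.

Lemma NcountC (R : realFieldType) (T Z : finType) (u : T -> Z -> R) z a b :
  Ncount u a b z = Ncount u b a z.
Proof. rewrite /Ncount; apply: eq_bigr => t _; rewrite addnC; congr addn; by rewrite andbC. Qed.

Lemma sumD2 (R : realFieldType) (T Z : finType) (u : T -> Z -> R) z a b :
  (forall z, injective (fun t => u t z)) -> a != b ->
  \sum_t (Ou u a t z - Ou u b t z) =
  if u b z < u a z then (Ncount u a b z)%:R + 1 else - ((Ncount u a b z)%:R + 1).
Proof.
move=> inj nab.
have ne : u a z != u b z by apply: contra nab => /eqP/inj ->.
case: ltP => h; first exact: (@sumD R T Z u z a b inj h).
have h' : u a z < u b z by rewrite lt_neqAle ne h.
rewrite NcountC -(@sumD R T Z u z b a inj h') -sumrN; apply: eq_bigr => t _; ring.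
Qed.

Lemma BCdiff (R : realFieldType) (T Z : finType) (u : T -> Z -> R) p a b :
  BC u p a - BC u p b =
  (#|T|%:R)^-1 * \sum_z p z * \sum_t (Ou u a t z - Ou u b t z).
Proof.
rewrite /BC -mulrBr; congr (_ * _).
rewrite [X in X - _]exchange_big [X in _ - X]exchange_big -sumrB /=.
apply: eq_bigr => z _.
rewrite mulr_sumr -sumrB; apply: eq_bigr => t _; by rewrite mulrBr.
Qed.

Theorem mainTheorem4 (R : realFieldType) (T Z : finType)
  (u : T -> Z -> R) (p : Z -> R) (uhat : T -> R) (k : Z) :
  is_distribution p ->
  (forall z, injective (fun t => u t z)) ->
  (exists t t', inconsistent u t t') ->
  (forall a b, uhat a > uhat b <-> BC u p a > BC u p b) ->
  (forall t t', inconsistent u t t' ->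
     p k > (1 + (maxN u t t')%:R) / (2 + (Ncount u t t' k)%:R + (maxN u t t')%:R)) ->
  (forall t1 t2, u t1 k > u t2 k -> BC u p t1 > BC u p t2 /\ uhat t1 > uhat t2) /\
  (forall t1 t2, uhat t1 > uhat t2 <-> u t1 k > u t2 k).
Proof.
move=> [p0 p1] inj _ huh hp.
have key : forall t1 t2, u t2 k < u t1 k -> BC u p t2 < BC u p t1.
  move=> t1 t2 h12.
  have n12 : t1 != t2 by apply: contraTneq h12 => ->; rewrite ltxx.
  have cT : (0 < #|T|)%N by apply/card_gt0P; exists t1.
  rewrite -subr_gt0 BCdiff pmulr_rgt0; last by rewrite invr_gt0 ltr0n.
  rewrite (eq_bigr (fun z => p z * (if u t2 z < u t1 z then (Ncount u t1 t2 z)%:R + 1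
      else - ((Ncount u t1 t2 z)%:R + 1)))); last first.
    by move=> z _; rewrite (@sumD2 R T Z u z t1 t2 inj n12).
  case: (boolP [exists z, u t1 z < u t2 z]) => [/existsP [z0 hz0] | /existsPn hall].
  - have hinc : inconsistent u t1 t2.
      case=> H; first by have := H z0; rewrite leNgt hz0.
      by have := H k; rewrite leNgt h12.
    have := hp _ _ hinc.
    set M := (maxN u t1 t2)%:R; set Nk := (Ncount u t1 t2 k)%:R.
    have M0 : 0 <= M by rewrite ler0n.
    have Nk0 : 0 <= Nk by rewrite ler0n.
    rewrite ltr_pdivrMr; last by lra.
    move=> hpk.
    rewrite (bigD1 k) //= h12.
    have hrest : - (M + 1) * (1 - p k) <=
       \sum_(z | z != k) p z * (if u t2 z < u t1 z then (Ncount u t1 t2 z)%:R + 1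
            else - ((Ncount u t1 t2 z)%:R + 1)).
      have -> : 1 - p k = \sum_(z | z != k) p z.
        by rewrite -p1 (bigD1 k) //= addrC addrK.
      rewrite mulr_sumr; apply: ler_sum => z _.
      rewrite mulrC; apply: ler_wpM2l; first exact: p0.
      have NM : (Ncount u t1 t2 z)%:R <= M :> R.
        by rewrite ler_nat; apply: leq_bigmax.
      have N0 : 0 <= (Ncount u t1 t2 z)%:R :> R by rewrite ler0n.
      case: ifP => _; lra.
    have E : p k * (Nk + 1) + - (M + 1) * (1 - p k) = p k * (2 + Nk + M) - (1 + M) by ring.
    apply: (lt_le_trans _ (lerD (lexx (p k * (Nk + 1))) hrest)).
    by rewrite E subr_gt0.
  - rewrite (lt_le_trans ltr01) // -{1}p1; apply: ler_sum => z _.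
    have hz : u t2 z < u t1 z.
      have := hall z; rewrite -leNgt le_eqVlt => /orP [/eqP E|//].
      by move: n12; rewrite (inj _ _ _ E) eqxx.
    rewrite hz; rewrite -{1}(mulr1 (p z)); apply: ler_wpM2l; first exact: p0.
    have N0 : 0 <= (Ncount u t1 t2 z)%:R :> R by rewrite ler0n.
    lra.
split.
  by move=> t1 t2 h; have := key _ _ h => hb; split => //; apply/huh.
move=> t1 t2; split; last by move=> h; apply/huh/key.
move=> /huh hb.
case: (ltgtP (u t1 k) (u t2 k)) => // h.
- by have := key _ _ h; rewrite ltNge (ltW hb).
- by move: hb; rewrite (inj _ _ _ h) ltxx.
Qed.
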